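(* Let $d$, $n$ and $m$ be integers with $d\geq 3$, $n\geq 6$ and $3n-5\leq m\leq\binom{n}{2}$. For each $G\in T_{n,m}$ it holds that $\lambda_{st}^d(G)\leq n-1$, with equality if and only if $G\in T_{n,m}^u$.
   Context: All graphs are finite, simple and undirected. A two-terminal graph is a graph $G$ together with two distinguished vertices $s,t$ (the terminals). $T_{n,m}$ denotes the set of all pairwise nonisomorphic (with isomorphisms preserving the set of terminals) two-terminal graphs with $n$ vertices and $m$ edges. For a positive integer $d$, a $d$-pathset of a two-terminal graph $G$ is a spanning subgraph of $G$ containing a path of length (number of edges) at most $d$ joining $s$ and $t$; $N_i^d(G)$ is the number of $d$-pathsets of $G$ with exactly $i$ edges. For $G\in T_{n,m}$ and $i\in\{1,\ldots,m\}$, $B_i^d(G)=\binom{m}{i}-N_{m-i}^d(G)$ is the number of $i$-element edge sets $U$ of $G$ such that $G-U$ is not a $d$-pathset (i.e. contains no $s$–$t$ path of length at most $d$). $\lambda_{st}^d(G)$ is the least positive integer $j$ with $B_j^d(G)>0$. A vertex is universal if it is adjacent to all other vertices; $T_{n,m}^u$ is the set of graphs in $T_{n,m}$ in which both terminals are universal. *)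

(* Defs.v *)
From mathcomp Require Import all_boot.
Set Implicit Arguments. Unset Strict Implicit. Unset Printing Implicit Defensive.

(* A two-terminal graph on vertex set 'I_n is given by an edge set
   E : {set {set 'I_n}} whose elements are 2-element vertex sets (a simple
   graph), together with terminals s t : 'I_n (s <> t). *)

Definition simple_edges (n : nat) (E : {set {set 'I_n}}) : bool :=
  [forall e in E, #|e| == 2].

Definition has_short_path (n : nat) (d : nat) (F : {set {set 'I_n}})
    (s t : 'I_n) : bool :=
  [exists k : 'I_(d.+1), exists p : k.-tuple 'I_n,
     [&& uniq (s :: val p), last s (val p) == t &
         path (fun x y => [set x; y] \in F) s (val p)]].

Definition B_st (n d : nat) (E : {set {set 'I_n}}) (s t : 'I_n) (i : nat) : nat :=
  #|[set U in powerset E | (#|U| == i) && ~~ has_short_path d (E :\: U) s t]|.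

(* lambda_st^d(G): least positive j (necessarily j <= m = #|E|) with B_j > 0;
   (0 if none exists, which never happens when s != t, since B_m = 1). *)
Definition lambda_st (n d : nat) (E : {set {set 'I_n}}) (s t : 'I_n) : nat :=
  head 0 [seq j <- iota 1 #|E| | 0 < B_st d E s t j].

Definition universal (n : nat) (E : {set {set 'I_n}}) (v : 'I_n) : bool :=
  [forall w : 'I_n, (w != v) ==> ([set v; w] \in E)].

(* Main.v *)
Require Import Defs.
From mathcomp Require Import all_boot zify.

Lemma head_filter_P (P : pred nat) (r : seq nat) :
  has P r -> P (head 0 [seq j <- r | P j]).
Proof. elim: r => //= x r IH; case: ifP => //= _; exact: IH. Qed.

Lemma head_filter_le (P : pred nat) a m j :
  P j -> a <= j < a + m -> head 0 [seq i <- iota a m | P i] <= j.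
Proof.
elim: m a => [|m IH] a Pj /andP[H1 H2]; first by lia.
rewrite /= ; case: ifP => Pa //=.
have ja : j != a by apply/eqP=> E; subst; rewrite Pj in Pa.
apply: IH => //; apply/andP; split; lia.
Qed.

Lemma head_filter_mem (P : pred nat) a m j :
  P j -> a <= j < a + m ->
  P (head 0 [seq i <- iota a m | P i]).
Proof.
move=> Pj Hj; apply: head_filter_P; apply/hasP; exists j => //.
by rewrite mem_iota.
Qed.

Section G.
Variables (n d : nat) (s t : 'I_n).
Hypothesis st : s != t.

Lemma nopath_s (F : {set {set 'I_n}}) :
  (forall e, e \in F -> s \notin e) -> ~~ has_short_path d F s t.
Proof.
move=> HF; apply/negP=> /existsP[k /existsP[p /and3P[_ Hl Hp]]].
move: Hl Hp; case: p => [[|v q] _] /=.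
  by move=> /eqP E; move: st; rewrite E eqxx.
by move=> _ /andP[/HF]; rewrite set21.
Qed.

Lemma nopath_t (F : {set {set 'I_n}}) :
  (forall e, e \in F -> t \notin e) -> ~~ has_short_path d F s t.
Proof.
move=> HF; apply/negP=> /existsP[k /existsP[p /and3P[_ Hl Hp]]].
move: Hl Hp; case: p => [r _] /=; case/lastP: r => [|q v] /=.
  by move=> /eqP E; move: st; rewrite E eqxx.
rewrite last_rcons rcons_path => /eqP -> /andP[_ /HF]; by rewrite set22.
Qed.

Lemma deg_bound (E : {set {set 'I_n}}) v (X : {set 'I_n}) :
  simple_edges E ->
  (forall w, w != v -> [set v; w] \in E -> w \in X) ->
  #|[set e in E | v \in e]| <= #|X|.
Proof.
move=> /forall_inP sE HX.
apply: leq_trans (leq_imset_card (fun w => [set v; w]) X).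
apply/subset_leq_card/subsetP=> e; rewrite inE => /andP[eE ve].
have /cards2P[x [y [xy ee]]] := sE e eE.
rewrite ee in eE ve *; case/set2P: ve => vE; subst v.
  by apply/imsetP; exists y => //; apply: HX; rewrite // eq_sym.
apply/imsetP; exists x; last by rewrite setUC.
by apply: HX; rewrite // setUC.
Qed.

End G.

Section H.
Variables (n d : nat) (s t : 'I_n).
Hypothesis st : s != t.

Lemma exists_cut (E : {set {set 'I_n}}) v :
  0 < #|E| ->
  (forall F : {set {set 'I_n}}, (forall e, e \in F -> v \notin e) -> ~~ has_short_path d F s t) ->
  exists j, [/\ 0 < j, j <= #|E|, j <= maxn 1 #|[set e in E | v \in e]| & 0 < B_st d E s t j].
Proof.
move=> E0 Hv; set C := [set e in E | v \in e].
have CE : C \subset E by apply/subsetP=> e; rewrite inE => /andP[].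
case: (posnP #|C|) => C0.
  have /card_gt0P[e0 e0E] := E0.
  exists 1; split => //; first by rewrite leq_max leqnn.
  apply/card_gt0P; exists [set e0]; rewrite inE powersetE sub1set e0E cards1 /=.
  apply: Hv => e; rewrite !inE => /andP[_ eE]; apply/negP => ve.
  have : e \in C by rewrite inE eE ve.
  by move/cards0_eq: C0 => ->; rewrite inE.
exists #|C|; split => //; first exact: subset_leq_card.
  by rewrite leq_max leqnn orbT.
apply/card_gt0P; exists C; rewrite inE powersetE CE eqxx /=.
apply: Hv => e; rewrite !inE => /andP[H eE]; apply/negP => ve.
by move: H; rewrite eE ve.
Qed.

Lemma mkpath1 (F : {set {set 'I_n}}) :
  1 <= d -> [set s; t] \in F -> has_short_path d F s t.
Proof.
move=> d1 H; apply/existsP; exists (Ordinal (d1 : 1 < d.+1)).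
apply/existsP; exists [tuple t] => /=.
by rewrite inE st eqxx H.
Qed.

Lemma mkpath2 (F : {set {set 'I_n}}) w :
  2 <= d -> w != s -> w != t -> [set s; w] \in F -> [set w; t] \in F ->
  has_short_path d F s t.
Proof.
move=> d2 ws wt H1 H2; apply/existsP; exists (Ordinal (d2 : 2 < d.+1)).
apply/existsP; exists [tuple w; t] => /=.
by rewrite !inE negb_or st eq_sym ws wt eqxx H1 H2.
Qed.

Lemma lower (E U : {set {set 'I_n}}) :
  2 <= d -> universal E s -> universal E t -> U \subset E -> #|U| <= n - 2 ->
  has_short_path d (E :\: U) s t.
Proof.
move=> d2 /forall_inP us /forall_inP ut UE Uc.
have d1 : 1 <= d by apply: leq_trans d2.
case: (boolP ([set s; t] \in U)) => stU; last first.
  by apply: mkpath1 => //; rewrite inE stU us // eq_sym.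
case: (boolP (has_short_path d (E :\: U) s t)) => // nop; exfalso.
pose W := [set w | (w != s) && (w != t)].
pose f w := if [set s; w] \in U then [set s; w] else [set w; t].
have fU w : w \in W -> f w \in U.
  rewrite inE => /andP[ws wt]; rewrite /f; case: ifP => // h1.
  apply/negPn/negP => h2; move/negP: nop; apply.
  apply: (@mkpath2 _ w d2 ws wt); rewrite inE ?h1 ?(negbTE h2) /=.
    by rewrite us.
  by rewrite setUC ut.
have fw w : w \in f w by rewrite /f; case: ifP => _; rewrite ?set21 ?set22.
have finj : {in W &, injective f}.
  move=> w w' _; rewrite inE => /andP[ws wt] E'.
  have := fw w'; rewrite -E' /f; case: ifP => _ /set2P[] // ?; subst.
    by rewrite eqxx in ws.
  by rewrite eqxx in wt.
have sub : f @: W \subset U :\ [set s; t].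
  apply/subsetP => e /imsetP[w wW ->]; rewrite !inE fU // andbT.
  apply/negP => /eqP ef.
  have := fw w; rewrite ef => /set2P[] ?; subst; move: wW; rewrite inE eqxx //= andbF //.
have := subset_leq_card sub; rewrite card_in_imset //.
have cW : #|W| = n - 2.
  have h := cardsC [set s; t]; rewrite cards2 st card_ord in h.
  have n2 : 2 <= n := eq_ind _ (fun k => 2 <= k) (leq_addr _ _) _ h.
  suff -> : W = ~: [set s; t].
    by apply/eqP; rewrite -(eqn_add2l 2) h subnKC.
  by apply/setP => w; rewrite !inE negb_or.
have := cardsD1 [set s; t] U; rewrite stU cW add1n. move: Uc => + h2 h3; rewrite h2 => h1. by have := leq_trans h1 h3; rewrite ltnn.
Qed.
End H.

Lemma lam_le n d (E : {set {set 'I_n}}) (s t : 'I_n) j :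
  0 < j -> j <= #|E| -> 0 < B_st d E s t j -> lambda_st d E s t <= j.
Proof.
move=> j0 jE Bj; rewrite /lambda_st.
apply: (head_filter_le (fun j => 0 < B_st d E s t j)) => //.
apply/andP; split => //; lia.
Qed.

Lemma lam_P n d (E : {set {set 'I_n}}) (s t : 'I_n) j :
  0 < j -> j <= #|E| -> 0 < B_st d E s t j -> 0 < B_st d E s t (lambda_st d E s t).
Proof.
move=> j0 jE Bj; rewrite /lambda_st.
apply: (@head_filter_mem (fun j => 0 < B_st d E s t j) _ _ j) => //.
apply/andP; split => //; lia.
Qed.

Lemma deg_le n (E : {set {set 'I_n}}) v :
  simple_edges E -> #|[set e in E | v \in e]| <= n.-1.
Proof.
move=> sE; have := @deg_bound _ E v [set~ v] sE.
rewrite cardsC1 card_ord; apply => w wv _; by rewrite !inE.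
Qed.

Lemma deg_lt n (E : {set {set 'I_n}}) v :
  simple_edges E -> ~~ universal E v -> #|[set e in E | v \in e]| <= n - 2.
Proof.
move=> sE; rewrite /universal negb_forall => /existsP[w0].
rewrite negb_imply => /andP[w0v nE].
have := @deg_bound _ E v ([set~ v] :\ w0) sE.
have := cardsD1 w0 [set~ v]; rewrite cardsC1 card_ord !inE w0v.
move=> h; have -> : #|[set~ v] :\ w0| = n - 2 by move: h; rewrite -subn1 /= add1n; lia.
apply => w wv wE; rewrite !inE wv andbT; apply/eqP => ww; subst.
by rewrite wE in nE.
Qed.

Theorem lemma12 (d n m : nat) (E : {set {set 'I_n}}) (s t : 'I_n) :
  3 <= d -> 6 <= n -> 3 * n - 5 <= m -> m <= 'C(n, 2) ->
  simple_edges E -> s != t -> #|E| = m ->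
  lambda_st d E s t <= n - 1 /\
  (lambda_st d E s t = n - 1 <-> universal E s /\ universal E t).
Proof.
move=> d3 n6 mlo _ sE st Em.
have E0 : 0 < #|E| by rewrite Em; lia.
have [js [js0 jsE jsC Bs]] := @exists_cut n d s t E s E0 (@nopath_s n d s t st).
have [jt [jt0 jtE jtC Bt]] := @exists_cut n d s t E t E0 (@nopath_t n d s t st).
have ls := lam_le _ _ _ _ _ _ js0 jsE Bs.
have lt := lam_le _ _ _ _ _ _ jt0 jtE Bt.
have ds := deg_le _ _ s sE.
have up : lambda_st d E s t <= n - 1 by lia.
split => //; split.
  move=> eq; split; apply/negPn/negP => nu.
    have h1 := leq_trans (eq_leq (esym eq)) (leq_trans ls jsC).
    have := deg_lt _ _ _ sE nu => h3.
    have : n - 1 <= n - 2; last by lia.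
    apply: leq_trans h1 _; rewrite geq_max; apply/andP; split; first by lia.
    exact: h3.
  have h1 := leq_trans (eq_leq (esym eq)) (leq_trans lt jtC).
  have := deg_lt _ _ _ sE nu => h3.
  have : n - 1 <= n - 2; last by lia.
  apply: leq_trans h1 _; rewrite geq_max; apply/andP; split; first by lia.
  exact: h3.
case=> us ut; apply/eqP; rewrite eqn_leq up /=.
have := lam_P _ _ _ _ _ _ js0 jsE Bs; case/card_gt0P => U; rewrite inE powersetE.
case/and3P => UE /eqP <- np.
rewrite leqNgt; apply/negP => Uc.
have d2 : 2 <= d by lia.
have := @lower n d s t st E U d2 us ut UE ltac:(lia).
by rewrite (negbTE np).
Qed.
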